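(* For every positive integer $k$ there exists a nonzero integer $s$ such that, for every $1\le i\le k$, $s^2$ can be written as a sum of $i$ squares of nonzero integers. *)

(* Defs.v *)
From Stdlib Require Import ZArith List.
Open Scope Z_scope.

Definition sum_sq (l : list Z) : Z := fold_right (fun x acc => x * x + acc) 0 l.

(* Main.v *)
Require Import Defs.
From Stdlib Require Import ZArith List Lia.
Open Scope Z_scope.

Lemma sum_sq_map5 : forall l, sum_sq (map (Z.mul 5) l) = 25 * sum_sq l.
Proof. induction l; [reflexivity|]. change (sum_sq (map (Z.mul 5) (a :: l))) with (5*a*(5*a) + sum_sq (map (Z.mul 5) l)). change (sum_sq (a::l)) with (a*a + sum_sq l). rewrite IHl. ring. Qed.

Lemma forall_map5 : forall l, Forall (fun x => x <> 0) l -> Forall (fun x => x <> 0) (map (Z.mul 5) l).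
Proof. induction 1; [constructor|]. cbn [map]. constructor; [|assumption]. lia. Qed.

Theorem lemma7p2 : forall k : nat, (1 <= k)%nat ->
  exists s : Z, s <> 0 /\
    forall i : nat, (1 <= i <= k)%nat ->
      exists l : list Z, length l = i /\ Forall (fun x => x <> 0) l /\
        s * s = sum_sq l.
Proof.
  intros k _. induction k as [|k IH].
  - exists 1. split; [lia|]. intros i Hi; lia.
  - destruct IH as [s [Hs H]]. exists (5 * s). split; [lia|].
    intros i Hi. destruct i as [|[|i]]; [lia| |].
    + exists (5 * s :: nil). split; [reflexivity|]. split.
      * constructor; [lia|constructor].
      * unfold sum_sq; simpl; ring.
    + destruct (H (S i)) as [l [Hl [Hf Hsum]]]; [lia|].
      destruct l as [|a rest]; [discriminate|].
      inversion Hf; subst.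
      exists (3 * a :: 4 * a :: map (Z.mul 5) rest). split.
      * simpl. rewrite length_map. simpl in Hl. lia.
      * split.
        -- constructor; [lia|]. constructor; [lia|]. apply forall_map5; auto.
        -- assert (E : sum_sq (a :: rest) = a * a + sum_sq rest) by reflexivity.
           change (sum_sq (3 * a :: 4 * a :: map (Z.mul 5) rest)) with
             (3 * a * (3 * a) + (4 * a * (4 * a) + sum_sq (map (Z.mul 5) rest))).
           rewrite sum_sq_map5. rewrite E in Hsum.
           replace (5 * s * (5 * s)) with (25 * (s * s)) by ring. rewrite Hsum. ring.
Qed.
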